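(* Let $x,\theta^\star,\check\theta\in\mathbb R^d$ with $\|x\|\le1$, let $\underline V\in\mathbb R^{d\times d}$ be symmetric positive definite with $\underline V\succ\alpha m I_d$ for some $\alpha>0$ and integer $m\ge1$, let $\beta>0$, and let $\eta$ be a mean-zero random vector in $\mathbb R^d$ with $0<\mathbb E\|\eta\|^2<\infty$. Set $\tilde\theta=\check\theta+\beta\underline V^{-1/2}\eta$ and $$\pi=\max[\pi_{\min},\min\{\pi_{\max},\Pr(x^\top\tilde\theta<0)\}],$$ with $0<\pi_{\min}<\pi_{\max}<1$. Let $\pi^\star=\pi_{\min}$ if $x^\top\theta^\star>0$, $\pi^\star=\pi_{\max}$ if $x^\top\theta^\star<0$, and $\pi^\star\in[\pi_{\min},\pi_{\max}]$ arbitrary if $x^\top\theta^\star=0$. Then $(\pi-\pi^\star)x^\top\theta^\star\ge0$ and $$(\pi-\pi^\star)x^\top\theta^\star<\sqrt{\frac{\|\check\theta-\theta^\star\|^2_{\underline V}+\beta^2\mathbb E\|\eta\|^2}{\min(\pi_{\min},1-\pi_{\max})\,\alpha m}}.$$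
   Context: In the paper this is applied conditionally on all information up to and including the context at decision point $(i,t)$, with $x=x_{i,t}$, $\theta^\star=\theta^\star_{i,t}$, $\check\theta=\check\theta_{i,t}$, $\underline V=\underline V_{i,t}$, $m=\min(i,t)$, $\beta=\beta_{i,t}$, and $\pi,\pi^\star$ the algorithm's and the optimal policy's probabilities of the control action. $\|y\|_A=\sqrt{y^\top Ay}$; $\Pr$ is over $\eta$ only. *)

(* Defs.v *)
From HB Require Import structures.
From mathcomp Require Import all_boot all_order all_algebra.
From mathcomp Require Import all_classical all_reals all_analysis.
Set Implicit Arguments. Unset Strict Implicit. Unset Printing Implicit Defensive.
Import Order.TTheory GRing.Theory Num.Theory.
Local Open Scope ring_scope.

Definition qform (R : ringType) (d : nat) (A : 'M[R]_d) (v : 'cV[R]_d) : R :=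
  (v^T *m A *m v) 0 0.

Definition sqnorm (R : ringType) (d : nat) (v : 'cV[R]_d) : R := (v^T *m v) 0 0.

Definition spd (R : numDomainType) (d : nat) (A : 'M[R]_d) : Prop :=
  A^T = A /\ forall v : 'cV[R]_d, v != 0 -> 0 < qform A v.

(* W is the (principal) square root of A: W symmetric positive definite with
   W W = A.  For A symmetric positive definite such a W exists and is unique,
   so this is the definition of A^{1/2}. *)
Definition is_sqrtmx (R : numDomainType) (d : nat) (W A : 'M[R]_d) : Prop :=
  spd W /\ W *m W = A.

(* Main.v *)
Require Import Defs.
From HB Require Import structures.
From mathcomp Require Import all_boot all_order all_algebra.
From mathcomp Require Import all_classical all_reals all_analysis.
Import Order.TTheory GRing.Theory Num.Theory.
From mathcomp Require Import ring lra.
Local Open Scope ring_scope.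


Section Mx.
Variable R : realType.
Variable d : nat.

Lemma dotE (u v : 'cV[R]_d) : (u^T *m v) 0 0 = \sum_i u i 0 * v i 0.
Proof. by rewrite mxE; apply: eq_bigr => i _; rewrite mxE. Qed.

Lemma dotC (u v : 'cV[R]_d) : (u^T *m v) 0 0 = (v^T *m u) 0 0.
Proof. by rewrite !dotE; apply: eq_bigr => i _; rewrite mulrC. Qed.

Lemma sqnorm_ge0 (u : 'cV[R]_d) : 0 <= sqnorm u.
Proof. by rewrite /sqnorm dotE; apply: sumr_ge0 => i _; rewrite -expr2 sqr_ge0. Qed.

Lemma sqnormBZ (u x : 'cV[R]_d) (p : R) :
  sqnorm (u - p *: x) = sqnorm u - 2 * p * (x^T *m u) 0 0 + p ^+ 2 * sqnorm x.
Proof.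
rewrite /sqnorm !dotE.
have -> : \sum_i u i 0 * u i 0 - 2 * p * (\sum_i x i 0 * u i 0) +
    p ^+ 2 * (\sum_i x i 0 * x i 0) =
  \sum_i (u i 0 * u i 0 - 2 * p * (x i 0 * u i 0) + p ^+ 2 * (x i 0 * x i 0)).
  by rewrite big_split sumrB /= !mulr_sumr.
by apply: eq_bigr => i _; rewrite !mxE; ring.
Qed.

Lemma cs_le1 (x u : 'cV[R]_d) : sqnorm x <= 1 ->
  ((x^T *m u) 0 0) ^+ 2 <= sqnorm u.
Proof.
move=> hx; set p := (x^T *m u) 0 0.
have := sqnorm_ge0 (u - p *: x); rewrite sqnormBZ -/p.
have := sqnorm_ge0 x => h0 h.
have : p ^+ 2 * sqnorm x <= p ^+ 2 by rewrite ler_piMr ?sqr_ge0.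
nra.
Qed.

Lemma qformBs (V : 'M[R]_d) (a : R) (u : 'cV[R]_d) :
  qform (V - a%:M) u = qform V u - a * sqnorm u.
Proof.
by rewrite /qform /sqnorm mulmxBr mulmxBl mul_mx_scalar -scalemxAl !mxE.
Qed.

Lemma qform0 (V : 'M[R]_d) : qform V 0 = 0.
Proof. by rewrite /qform mulmx0 mxE. Qed.

Lemma spd_qform_ge0 (V : 'M[R]_d) u : spd V -> 0 <= qform V u.
Proof.
move=> [_ h]; have [->|nz] := eqVneq u 0; first by rewrite qform0.
exact/ltW/h.
Qed.

Lemma qform_lb (V : 'M[R]_d) (a : R) u : spd (V - a%:M) ->
  a * sqnorm u <= qform V u.
Proof.
move=> h; have := spd_qform_ge0 _ u h; rewrite qformBs; lra.
Qed.


Lemma spd_unit (V : 'M[R]_d) : spd V -> V \in unitmx.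
Proof.
move=> [Vs h]; rewrite -row_free_unit -kermx_eq0; apply/eqP/row_matrixP => i.
rewrite row0; apply/eqP; apply/negPn/negP => nz.
set r := row i (kermx V).
have rV0 : r *m V = 0 by rewrite /r -row_mul mulmx_ker row0.
have := h r^T; rewrite trmx_eq0 nz => /(_ isT).
by rewrite /qform trmxK rV0 mul0mx mxE ltxx.
Qed.

Lemma WVW (V W : 'M[R]_d) : spd V -> is_sqrtmx W (invmx V) -> W *m V *m W = 1%:M.
Proof.
move=> /spd_unit uV [_ hWW].
have c1 : W *m invmx V = invmx V *m W by rewrite -hWW mulmxA.
have hWV : W *m V = V *m W.
  rewrite -[RHS]mulmx1 -(mulVmx uV) !mulmxA -(mulmxA V W) c1 !mulmxA.
  by rewrite (mulmxV uV) mul1mx.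
by rewrite hWV -mulmxA hWW (mulmxV uV).
Qed.

Lemma key_bound (V W : 'M[R]_d) (a : R) (e : 'cV[R]_d) :
  spd V -> spd (V - a%:M) -> is_sqrtmx W (invmx V) ->
  a * sqnorm (W *m e) <= sqnorm e.
Proof.
move=> sV sVa hW; have := qform_lb _ _ (W *m e) sVa.
have -> // : qform V (W *m e) = sqnorm e.
have [[Wt _] _] := hW.
rewrite /qform /sqnorm trmx_mul Wt -!mulmxA (mulmxA W V) (mulmxA (W *m V)).
by rewrite WVW // mul1mx.
Qed.

Lemma mxE_add (p n : nat) (A B : 'M[R]_(p, n)) i j : (A + B) i j = A i j + B i j.
Proof. by rewrite mxE. Qed.
Lemma mxE_scale (p n : nat) a (A : 'M[R]_(p, n)) i j : (a *: A) i j = a * A i j.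
Proof. by rewrite mxE. Qed.

End Mx.

Theorem lemmaE14 (dT : measure_display) (T : measurableType dT) (R : realType)
  (P : probability T R) (d : nat)
  (x thstar thcheck : 'cV[R]_d) (V W : 'M[R]_d) (alpha beta : R) (m : nat)
  (eta : T -> 'cV[R]_d) (pimin pimax pistar : R) :
  sqnorm x <= 1 ->
  spd V ->
  0 < alpha -> (1 <= m)%N ->
  spd (V - (alpha * m%:R)%:M) ->
  0 < beta ->
  (* W = V^{-1/2} *)
  is_sqrtmx W (invmx V) ->
  (* eta is a random vector with mean zero *)
  (forall i : 'I_d, measurable_fun setT (fun t => eta t i 0)) ->
  (forall i : 'I_d, P.-integrable setT (fun t => (eta t i 0)%:E)) ->
  (forall i : 'I_d, (\int[P]_t (eta t i 0)%:E = 0)%E) ->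
  (* 0 < E ||eta||^2 < oo *)
  (0 < \int[P]_t (sqnorm (eta t))%:E)%E ->
  (\int[P]_t (sqnorm (eta t))%:E < +oo)%E ->
  0 < pimin -> pimin < pimax -> pimax < 1 ->
  let xth := (x^T *m thstar) 0 0 in
  (0 < xth -> pistar = pimin) ->
  (xth < 0 -> pistar = pimax) ->
  (xth = 0 -> pimin <= pistar <= pimax) ->
  let thtilde := fun t => thcheck + beta *: (W *m eta t) in
  let pr := fine (P [set t : T | (x^T *m thtilde t) 0 0 < 0]%classic) in
  let pi := Num.max pimin (Num.min pimax pr) in
  let Eeta2 := fine (\int[P]_t (sqnorm (eta t))%:E) in
  0 <= (pi - pistar) * xth /\
  (pi - pistar) * xth <
    Num.sqrt ((qform V (thcheck - thstar) + beta ^+ 2 * Eeta2)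
              / (Num.min pimin (1 - pimax) * alpha * m%:R)).
Proof.
move=> hx sV ha hm sVa hb hW meas integ mean0 Epos Efin h0 h01 h1 xth hpos hneg
  hzero thtilde pr pi Eeta2.
set am := alpha * m%:R.
have am0 : 0 < am by rewrite /am mulr_gt0 // ltr0n.
set c := Num.min pimin (1 - pimax).
have c0 : 0 < c by rewrite /c lt_min h0 subr_gt0 h1.
have cmin : c <= pimin /\ c <= 1 - pimax by split; rewrite /c ge_min lexx ?orbT.
have E0 : 0 < Eeta2 by apply: fine_gt0; rewrite Epos Efin.
set q := qform V (thcheck - thstar).
have q0 : 0 <= q by apply: spd_qform_ge0.
set S := (q + beta ^+ 2 * Eeta2) / (c * alpha * m%:R).
have S0 : 0 < S.
  by rewrite /S divr_gt0 // ?mulr_gt0 // ?ltr0n // ltr_wpDl // mulr_gt0 // exprn_gt0.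
have pir : pimin <= pi <= pimax.
  by rewrite /pi le_max lexx /= ge_max (ltW h01) /= ge_min lexx.
have pisr : pimin <= pistar <= pimax.
  case: (ltgtP xth 0) => hh; [rewrite hneg // | rewrite hpos // | exact: hzero].
    by rewrite (ltW h01) lexx.
  by rewrite (ltW h01) lexx.
have nonneg : 0 <= (pi - pistar) * xth.
  case: (ltgtP xth 0) => hh; last by rewrite hh mulr0.
    rewrite hneg // nmulr_lge0 // subr_le0; by case/andP: pir.
  rewrite hpos // pmulr_lge0 // subr_ge0; by case/andP: pir.
split => //.
have [le0|gt0] := leP ((pi - pistar) * xth) 0.
  by apply: le_lt_trans le0 _; rewrite sqrtr_gt0.
suff hx2 : xth ^+ 2 < S.
  have : (pi - pistar) * xth <= `|xth|.
    apply: le_trans (ler_norm _) _; rewrite normrM ler_piMl //.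
    move: pir pisr => /andP[? ?] /andP[? ?].
    rewrite ler_norml; apply/andP; split; lra.
  by move=> h; apply: le_lt_trans h _; rewrite -sqrtr_sqr ltr_sqrt.

set wr := x^T *m W.
pose b t := \sum_j wr 0 j * eta t j 0.
have hbE t : (x^T *m (W *m eta t)) 0 0 = b t by rewrite mulmxA mxE.
set k := (x^T *m thcheck) 0 0 - xth.
have hg t : (x^T *m thtilde t) 0 0 = xth + (k + beta * b t).
  rewrite /thtilde mulmxDr -scalemxAr mxE_add mxE_scale hbE /k.
  ring.
have hk : am * k ^+ 2 <= q.
  have -> : k = (x^T *m (thcheck - thstar)) 0 0.
    rewrite /k /xth !dotE -sumrB; apply: eq_bigr => i _; rewrite !mxE; ring.
  have := @cs_le1 _ _ x (thcheck - thstar) hx; have := @qform_lb _ _ V am (thcheck - thstar) sVa.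
  rewrite -/am -/q => h1' h2'.
  apply: le_trans _ h1'; by rewrite ler_wpM2l // ltW.
have hbb t : am * b t ^+ 2 <= sqnorm (eta t).
  rewrite -hbE; have := @cs_le1 _ _ x (W *m eta t) hx.
  have := @key_bound _ _ V W am (eta t) sV sVa hW => h1' h2'.
  apply: le_trans _ h1'; by rewrite ler_wpM2l // ltW.
have mb : measurable_fun setT b.
  rewrite /b; apply: measurable_sum => j.
  exact: (measurable_realfun.measurable_funM (measurable_cst _) (meas j)).
have msq : measurable_fun setT (fun t => sqnorm (eta t)).
  have -> : (fun t => sqnorm (eta t)) = fun t => \sum_j eta t j 0 * eta t j 0.
    by apply/funext => t; rewrite /sqnorm dotE.
  apply: measurable_sum => j.
  exact: (measurable_realfun.measurable_funM (meas j) (meas j)).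
have bE : (fun t => (b t)%:E) = fun t => (\sum_j ((wr 0 j)%:E * (eta t j 0)%:E))%E.
  by apply/funext => t; rewrite /b -sumEFin; apply: eq_bigr => j _; rewrite EFinM.
have ib : P.-integrable setT (fun t => (b t)%:E).
  rewrite bE; apply: integrable_sum => // j _; exact: integrableZl.
have intb : (\int[P]_t (b t)%:E = 0)%E.
  rewrite bE integral_sum //; last by move=> j; exact: integrableZl.
  by apply: big1 => j _; rewrite integralZl // mean0 mule0.
have isq : P.-integrable setT (fun t => (sqnorm (eta t))%:E).
  apply/integrableP; split; first exact/measurable_realfun.measurable_EFinP.
  rewrite (eq_integral (fun t => (sqnorm (eta t))%:E)); first exact: Efin.
  by move=> t _; rewrite abse_EFin ger0_norm // sqnorm_ge0.
have ib2 : P.-integrable setT (fun t => (b t ^+ 2)%:E).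
  apply: (@le_integrable _ _ _ P setT measurableT _ (fun t => (am^-1)%:E * (sqnorm (eta t))%:E)%E); last exact: integrableZl.
    apply/measurable_realfun.measurable_EFinP.
    exact: (measurable_realfun.measurable_funM mb mb).
  move=> t _; rewrite -EFinM !abse_EFin lee_fin ger0_norm ?sqr_ge0 //.
  rewrite ger0_norm ?mulr_ge0 ?invr_ge0 ?sqnorm_ge0 ?(ltW am0) //.
  by rewrite mulrC ler_pdivlMr // mulrC.

have mf : measurable_fun setT (fun t => k + beta * b t).
  apply: (measurable_realfun.measurable_funD (measurable_cst _)).
  exact: (measurable_realfun.measurable_funM (measurable_cst _) mb).
have icst (r : R) : P.-integrable setT (fun t => r%:E).
  exact: (finite_measure_integrable_cst P r measurableT).
have hfint : (\int[P]_t ((k + beta * b t) ^+ 2)%:E =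
    (k ^+ 2)%:E + (beta ^+ 2)%:E * \int[P]_t (b t ^+ 2)%:E)%E.
  have -> : (fun t => ((k + beta * b t) ^+ 2)%:E) = fun t =>
      ((k ^+ 2)%:E + ((2 * k * beta)%:E * (b t)%:E + (beta ^+ 2)%:E * (b t ^+ 2)%:E))%E.
    by apply/funext => t; rewrite -!EFinM -!EFinD; congr EFin; ring.
  rewrite integralD //; last first.
    by apply: integrableD => //; apply: integrableZl.
  rewrite integralD //; try by apply: integrableZl.
  rewrite !integralZl // intb mule0 add0e.
  by rewrite integral_cst //= probability_setT mule1.
have hB : (\int[P]_t (b t ^+ 2)%:E <= (am^-1 * Eeta2)%:E)%E.
  apply: le_trans (le_integral (mu:=P) measurableT ib2 (integrableZl measurableT am^-1 isq) _) _.
    move=> t _; rewrite lee_fin mulrC ler_pdivlMr // mulrC; exact: hbb.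
  rewrite integralZl // EFinM /Eeta2 fineK //.
  exact: integrable_fin_num isq.

set A := [set t : T | (x^T *m thtilde t) 0 0 < 0]%classic.
have mg : measurable_fun setT (fun t => (x^T *m thtilde t) 0 0).
  have -> : (fun t => (x^T *m thtilde t) 0 0) = fun t => xth + (k + beta * b t).
    by apply/funext => t; rewrite hg.
  exact: (measurable_realfun.measurable_funD (measurable_cst _) mf).
have mA : measurable A.
  have -> : A = (setT `&` ((fun t => (x^T *m thtilde t) 0 0) @^-1` `]-oo, 0[))%classic.
    apply/seteqP; split => t /= h; first by split => //; rewrite in_itv /=.
    by case: h => _; rewrite in_itv /=.
  by apply: mg => //; exact: measurable_itv.
have PAfin : P A \is a fin_num.
  by rewrite ge0_fin_numE ?measure_ge0 // (le_lt_trans (probability_le1 P mA)) ?ltey.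
have PAE : P A = pr%:E by rewrite /pr fineK.
have [E [mE [pe [PE [cpe sub]]]]] : exists E, measurable E /\ exists pe,
    P E = pe%:E /\ c < pe /\ (forall t, E t -> xth ^+ 2 <= (k + beta * b t) ^+ 2).
  case: (ltgtP xth 0) => hh; last by move: gt0; rewrite hh mulr0 ltxx.
  - exists (~` A)%classic; split; first exact: measurableC.
    exists (1 - pr); split; first by rewrite probability_setC // PAE EFinB.
    split.
      move: gt0; rewrite hneg // (nmulr_lgt0 _ hh) subr_lt0 /pi gt_max h01 /= gt_min ltxx /= => hp.
      case: cmin => _ c2; lra.
    move=> t /= hA; have : 0 <= (x^T *m thtilde t) 0 0 by rewrite leNgt; apply/negP.
    rewrite hg => h; nra.
  - exists A; split => //; exists pr; split => //; split.
      move: gt0; rewrite hpos // (pmulr_lgt0 _ hh) subr_gt0 /pi lt_max ltxx /= lt_min h01 /=.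
      case: cmin => c1 _ hp; lra.
    move=> t; rewrite /A /= hg => h; nra.
have mk : ((xth ^+ 2)%:E * pe%:E <= \int[P]_t ((k + beta * b t) ^+ 2)%:E)%E.
  rewrite -PE -(integral_cst P mE).
  apply: le_trans (ge0_subset_integral P mE measurableT _ _ (subsetT E)); last 2 first.
  - exact/measurable_realfun.measurable_EFinP/(measurable_realfun.measurable_funM mf mf).
  - by move=> t _; rewrite lee_fin sqr_ge0.
  apply: ge0_le_integral => //.
  - by move=> t _; rewrite /cst lee_fin sqr_ge0.
  - apply: (measurable_funS measurableT (subsetT E)).
    exact/measurable_realfun.measurable_EFinP/(measurable_realfun.measurable_funM mf mf).
have fin : xth ^+ 2 * pe <= k ^+ 2 + beta ^+ 2 * (am^-1 * Eeta2).
  rewrite -lee_fin EFinD !EFinM -EFinM; apply: le_trans mk _.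
  rewrite hfint; apply: leeD2l; rewrite EFinM; apply: lee_wpmul2l => //.
  by rewrite lee_fin sqr_ge0.

have xne : xth != 0 by apply: contraTneq gt0 => ->; rewrite mulr0 ltxx.
have x2 : 0 < xth ^+ 2 by rewrite lt_neqAle sqr_ge0 andbT eq_sym sqrf_eq0.
set Bv := am^-1 * Eeta2 in fin.
have EB : Eeta2 = am * Bv by rewrite /Bv mulrA mulrV ?mul1r // unitfE gt_eqF.
rewrite /S -(mulrA c) -/am ltr_pdivlMr ?mulr_gt0 //.
have h2 : am * (xth ^+ 2 * c) < am * (xth ^+ 2 * pe) by rewrite ltr_pM2l // ltr_pM2l.
have h3 : am * (xth ^+ 2 * pe) <= am * (k ^+ 2 + beta ^+ 2 * Bv) by rewrite ler_wpM2l // ltW.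
rewrite EB; nra.
by rewrite ltr0n.
Qed.
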